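(* Consider the Jacobi matrix of Example 4.1 and let $x_0\in\mathbb{R}$. Suppose there are constants $C,D>0$ and $\alpha,\beta>0$ such that (i) for all $j\ge1$ and all $n\in C_j\cup A_{j+1}$, $|p_n(x_0)|\le C^{j+1}\exp(\alpha 2^{j^2})$; (ii) for all sufficiently large $j$, $\big(p_{n_j-1}(x_0)^2+p_{n_j}(x_0)^2\big)^{1/2}\ge D^{-(j+1)}\exp(\beta2^{j^2})$, where $n_j$ is the ''center'' of $C_j$. Then $\displaystyle \frac{p_n(x_0)^2}{\sum_{k=0}^n p_k(x_0)^2}$ does not tend to $0$ as $n\to\infty$ (so the Nevai condition fails at $x_0$).
   Context: Example 4.1: partition $\{1,2,\dots\}$ into successive consecutive blocks $A_1,C_1,A_2,C_2,\dots$ with $\#A_j=3^{j^2}$ and $\#C_j=2^{j^2}$; the Jacobi parameters are $b_n=0$ for all $n$, $a_n=1$ for $n\in A_j$, $a_n=\tfrac12$ for $n\in C_j$. $p_n$ ($n\ge0$) are the orthonormal polynomials defined by $p_{-1}=0$, $p_0=1$, $xp_n=a_{n+1}p_{n+1}+b_{n+1}p_n+a_np_{n-1}$. If $C_j=\{m_j+1,\dots,m_j+2^{j^2}\}$, its ''center'' is $n_j=m_j+\tfrac12 2^{j^2}$. The Nevai condition at $x_0$ means $K_n(x,x_0)^2\,d\rho(x)/K_n(x_0,x_0)\to\delta_{x_0}$ weakly, where $\rho$ is the orthogonality measure and $K_n(x,y)=\sum_{j=0}^np_j(x)p_j(y)$. *)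

(* Defs.v *)
From Stdlib Require Import Reals Lra Lia List.
Open Scope R_scope.

(* Block structure of Example 4.1.  Indices j >= 1.
   A_j = {blk_start j + 1, ..., blk_start j + 3^(j^2)}
   C_j = {m_blk j + 1, ..., m_blk j + 2^(j^2)}, with m_blk j = blk_start j + 3^(j^2). *)
Fixpoint blk_start (j : nat) : nat :=
  match j with
  | O => 0%nat
  | S O => 0%nat
  | S j' => (blk_start j' + 3 ^ (j' * j') + 2 ^ (j' * j'))%nat
  end.

Definition m_blk (j : nat) : nat := (blk_start j + 3 ^ (j * j))%nat.

Definition inA (j n : nat) : Prop := (1 <= j /\ blk_start j < n <= m_blk j)%nat.
Definition inC (j n : nat) : Prop := (1 <= j /\ m_blk j < n <= m_blk j + 2 ^ (j * j))%nat.

(* Boolean test: does n lie in some C_j?  Since m_blk j >= 3^(j^2) >= j,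
   any j with n in C_j satisfies j < n, so searching j in 1..n suffices. *)
Definition inC_b (j n : nat) : bool :=
  (Nat.ltb (m_blk j) n && Nat.leb n (m_blk j + 2 ^ (j * j)))%bool.
Definition in_some_C (n : nat) : bool := existsb (fun j => inC_b j n) (seq 1 n).

Definition jac_a (n : nat) : R := if in_some_C n then / 2 else 1.
Definition jac_b (n : nat) : R := 0.

(* (p_n(x), p_{n+1}(x)) from p_{-1} = 0, p_0 = 1 and
   x p_n = a_{n+1} p_{n+1} + b_{n+1} p_n + a_n p_{n-1}. *)
Fixpoint pp (x : R) (n : nat) : R * R :=
  match n with
  | O => (1, (x - jac_b 1) / jac_a 1)
  | S k => let (u, v) := pp x k in
           (v, ((x - jac_b (S (S k))) * v - jac_a (S k) * u) / jac_a (S (S k)))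
  end.

Definition p (n : nat) (x : R) : R := fst (pp x n).

Definition center (j : nat) : nat := (m_blk j + 2 ^ (j * j) / 2)%nat.

(* Main.v *)
Require Import Defs.
From Stdlib Require Import Reals Lra Lia ZArith.
Open Scope R_scope.

Lemma nat_above (r : R) : exists N : nat, r < INR N.
Proof.
  destruct (Rle_or_lt r 0) as [H|H].
  - exists 1%nat. simpl. lra.
  - destruct (archimed r) as [H1 H2].
    assert (Hp : (0 < up r)%Z) by (apply lt_IZR; lra).
    exists (Z.to_nat (up r)). rewrite INR_IZR_INZ, Z2Nat.id by lia. lra.
Qed.

Lemma sq_le_pow2 (n : nat) : (4 <= n)%nat -> (n * n <= 2 ^ n)%nat.
Proof.
  induction n as [|n IH]; intro H; [lia|].
  destruct (Nat.eq_dec n 3) as [->|Hn]; [simpl; lia|].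
  assert (IH' := IH ltac:(lia)). rewrite Nat.pow_succ_r'. nia.
Qed.

Lemma lin_le_pow2 (c : R) : exists N : nat, forall n : nat, (N <= n)%nat ->
  c * INR n <= INR (2 ^ n).
Proof.
  destruct (nat_above c) as [N0 HN0].
  exists (Nat.max N0 4). intros n Hn.
  assert (h := sq_le_pow2 n ltac:(lia)).
  apply le_INR in h. rewrite mult_INR in h.
  assert (INR N0 <= INR n) by (apply le_INR; lia).
  assert (0 <= INR n) by apply pos_INR.
  nra.
Qed.

Lemma exp_le (x y : R) : x <= y -> exp x <= exp y.
Proof. intro H. destruct (Rle_lt_or_eq_dec _ _ H) as [h|h]. left; apply exp_increasing; auto. rewrite h; lra. Qed.

Lemma pow_exp (a : R) (m : nat) : 0 < a -> a ^ m = exp (INR m * ln a).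
Proof. intro. rewrite <- ln_pow by lra. rewrite exp_ln; auto. apply pow_lt; lra. Qed.

Lemma G (a g : R) (k : nat) : 1 <= a -> 0 < g -> exists J : nat, forall j : nat, (J <= j)%nat ->
  a ^ (k * (j * j)) <= exp (g * INR (2 ^ (j * j))).
Proof.
  intros Ha Hg.
  destruct (lin_le_pow2 (INR k * ln a / g)) as [N HN].
  exists (Nat.max N 1). intros j Hj.
  rewrite pow_exp by lra. apply exp_le.
  assert (h := HN (j * j)%nat ltac:(nia)).
  rewrite mult_INR.
  assert (0 <= ln a) by (destruct (Rle_lt_or_eq_dec _ _ Ha) as [hh|hh]; [left; rewrite <- ln_1; apply ln_increasing; lra | rewrite <- hh, ln_1; lra]).
  assert (0 <= INR k) by apply pos_INR.
  assert (INR k * ln a / g * INR (j*j) * g <= INR (2 ^ (j * j)) * g) by (apply Rmult_le_compat_r; lra).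
  replace (INR k * ln a / g * INR (j*j) * g) with (INR k * INR (j*j) * ln a) in H1 by (field; lra).
  lra.
Qed.

Lemma blk_S (j : nat) : (1 <= j)%nat -> blk_start (S j) = (m_blk j + 2 ^ (j * j))%nat.
Proof. intro H. destruct j as [|j]; [lia|]. unfold m_blk. reflexivity. Qed.

Lemma blocks (j : nat) : (1 <= j)%nat -> forall k, (m_blk 1 < k <= m_blk j)%nat ->
  exists i, (1 <= i)%nat /\ (i + 1 <= j)%nat /\ (inC i k \/ inA (S i) k).
Proof.
  induction j as [|j IH]; intros Hj k Hk; [lia|].
  destruct (Nat.eq_dec j 0) as [->|Hj0]; [lia|].
  destruct (le_lt_dec k (m_blk j)) as [h|h].
  - destruct (IH ltac:(lia) k ltac:(lia)) as [i [h1 [h2 h3]]]. exists i; repeat split; auto; lia.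
  - exists j. split; [lia|split;[lia|]].
    destruct (le_lt_dec k (m_blk j + 2 ^ (j*j))) as [h'|h'].
    + left. unfold inC. lia.
    + right. unfold inA. rewrite blk_S by lia. split; [lia|]. split; [lia|]. lia.
Qed.

Lemma m_blk_1 : m_blk 1 = 3%nat.
Proof. reflexivity. Qed.

Lemma sum_le_const (f : nat -> R) (b : R) (n : nat) :
  (forall k, (k <= n)%nat -> f k <= b) -> sum_f_R0 f n <= INR (S n) * b.
Proof.
  induction n as [|n IH]; intro H.
  - simpl. specialize (H 0%nat ltac:(lia)). lra.
  - rewrite tech5, S_INR. specialize (IH (fun k hk => H k ltac:(lia))).
    specialize (H (S n) ltac:(lia)). lra.
Qed.

Lemma sum_ge1 (n : nat) (x : R) : 1 <= sum_f_R0 (fun k => p k x ^ 2) n.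
Proof.
  induction n as [|n IH].
  - simpl. unfold p. simpl. lra.
  - rewrite tech5. assert (0 <= p (S n) x ^ 2) by apply pow2_ge_0. lra.
Qed.

Lemma growth (x beta : R) : 0 < beta ->
  Un_cv (fun n => p n x ^ 2 / sum_f_R0 (fun k => p k x ^ 2) n) 0 ->
  exists N : nat, forall m k : nat, (N <= m)%nat ->
    sum_f_R0 (fun k => p k x ^ 2) (m + k) <= exp (beta * INR k) * sum_f_R0 (fun k => p k x ^ 2) m.
Proof.
  intros Hb Hcv.
  set (S := fun n => sum_f_R0 (fun k => p k x ^ 2) n).
  set (e := Rmin (1/2) (beta/2)).
  assert (He : 0 < e) by (unfold e; apply Rmin_glb_lt; lra).
  destruct (Hcv e He) as [N HN].
  assert (step : forall m, (N <= m)%nat -> S (Datatypes.S m) <= exp beta * S m).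
  { intros m Hm. specialize (HN (Datatypes.S m) ltac:(lia)). unfold R_dist in HN.
    rewrite Rminus_0_r in HN. fold (S (Datatypes.S m)) in HN.
    assert (h1 := sum_ge1 (Datatypes.S m) x). fold (S (Datatypes.S m)) in h1.
    assert (hS : S (Datatypes.S m) = S m + p (Datatypes.S m) x ^ 2) by (unfold S; rewrite tech5; auto).
    assert (hq : 0 <= p (Datatypes.S m) x ^ 2) by apply pow2_ge_0.
    assert (hr : p (Datatypes.S m) x ^ 2 <= e * S (Datatypes.S m)).
    { apply Rabs_def2 in HN. destruct HN as [HN _].
      apply Rmult_lt_compat_r with (r := S (Datatypes.S m)) in HN; [|lra].
      unfold Rdiv in HN. rewrite Rmult_assoc, Rinv_l in HN; lra. }
    assert (e <= 1/2) by apply Rmin_l. assert (e <= beta/2) by apply Rmin_r.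
    assert (hexp := exp_ineq1_le beta).
    assert (S (Datatypes.S m) <= (1 + beta) * S m).
    { assert (h0 : 1 <= S m) by apply sum_ge1. nra. }
    assert (1 <= S m) by apply sum_ge1. nra. }
  exists N. intros m k Hm. fold (S m). change (S (m + k)%nat <= exp (beta * INR k) * S m).
  induction k as [|k IH].
  - rewrite Nat.add_0_r. simpl. rewrite Rmult_0_r, exp_0. lra.
  - rewrite Nat.add_succ_r. eapply Rle_trans; [apply step; lia|].
    rewrite S_INR, Rmult_plus_distr_l, Rmult_1_r, exp_plus.
    assert (0 < exp beta) by apply exp_pos. nra.
Qed.

Lemma m_blk_bound (j : nat) : (1 <= j)%nat -> (m_blk j + 1 <= 4 ^ (j * j))%nat.
Proof.
  induction j as [|j IH]; intro Hj; [lia|].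
  destruct (Nat.eq_dec j 0) as [->|Hj0]; [reflexivity|].
  specialize (IH ltac:(lia)).
  assert (hm : m_blk (S j) = (m_blk j + 2 ^ (j * j) + 3 ^ (S j * S j))%nat).
  { unfold m_blk at 1. rewrite blk_S by lia. lia. }
  rewrite hm.
  assert (e1 : (S j * S j = S (j * j + 2 * j))%nat) by lia.
  rewrite e1, !Nat.pow_succ_r'.
  assert (h2 : (2 ^ (j*j) <= 4 ^ (j*j))%nat) by (apply Nat.pow_le_mono_l; lia).
  assert (h3 : (3 ^ (j*j + 2*j) <= 4 ^ (j*j + 2*j))%nat) by (apply Nat.pow_le_mono_l; lia).
  assert (h4 : (4 ^ (j*j + 2*j) = 4 ^ (j*j) * 4 ^ (2 * j))%nat) by apply Nat.pow_add_r.
  assert (h5 : (4 ^ 1 <= 4 ^ (2 * j))%nat) by (apply Nat.pow_le_mono_r; lia).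
  rewrite Nat.pow_1_r in h5. assert (h6 : (4 * 4 ^ (j*j) <= 4 ^ (j*j + 2*j))%nat) by (rewrite h4; nia). lia.
Qed.

Theorem proposition4p3 (x0 C D alpha beta : R)
  (hC : 0 < C) (hD : 0 < D) (halpha : 0 < alpha) (hbeta : 0 < beta)
  (hi : forall (j n : nat), (1 <= j)%nat -> (inC j n \/ inA (S j) n) ->
          Rabs (p n x0) <= C ^ (S j) * exp (alpha * INR (2 ^ (j * j))))
  (hii : exists J : nat, forall j : nat, (J <= j)%nat -> (1 <= j)%nat ->
          sqrt (p (center j - 1) x0 ^ 2 + p (center j) x0 ^ 2)
            >= / D ^ (S j) * exp (beta * INR (2 ^ (j * j)))) :
  ~ Un_cv (fun n => p n x0 ^ 2 / sum_f_R0 (fun k => p k x0 ^ 2) n) 0.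
Proof.
  intro Hcv.
  destruct (growth x0 beta hbeta Hcv) as [N HN].
  destruct hii as [J0 HJ0].
  set (f := fun k => p k x0 ^ 2).
  set (M := Rmax C 1). set (D2 := Rmax D 1). set (K := sum_f_R0 f 3).
  assert (hM : 1 <= M) by apply Rmax_r. assert (hD2 : 1 <= D2) by apply Rmax_r.
  assert (hK : 0 <= K) by (apply cond_pos_sum; intro; apply pow2_ge_0).
  assert (hb4 : 0 < beta / 4) by lra.
  destruct (G D2 (beta/4) 4 hD2 hb4) as [J1 HJ1].
  destruct (G M (beta/4) 2 hM hb4) as [J2 HJ2].
  destruct (G 4 (beta/4) 1 ltac:(lra) hb4) as [J3 HJ3].
  destruct (G (K+1) (beta/4) 1 ltac:(lra) hb4) as [J4 HJ4].
  destruct (lin_le_pow2 (8 * alpha / beta)) as [J5 HJ5].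
  set (j := Nat.max N (Nat.max J0 (Nat.max J1 (Nat.max J2 (Nat.max J3 (Nat.max J4 (Nat.max J5 1))))))).
  assert (hj1 : (1 <= j)%nat) by lia.
  specialize (HJ0 j ltac:(lia) hj1). specialize (HJ1 j ltac:(lia)). specialize (HJ2 j ltac:(lia)).
  specialize (HJ3 j ltac:(lia)). specialize (HJ4 j ltac:(lia)). specialize (HJ5 j ltac:(lia)).
  set (X := INR (2 ^ (j * j))) in *.
  set (Y := INR (2 ^ ((j - 1) * (j - 1)))).
  set (E := exp (beta / 4 * X)) in *.
  assert (hX : 0 < X) by (apply lt_0_INR; apply Nat.neq_0_lt_0; apply Nat.pow_nonzero; lia).
  assert (hE1 : 1 < E).
  { unfold E. rewrite <- exp_0. apply exp_increasing. nra. }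
  set (m := m_blk j).
  set (B := M ^ (2 * (j * j)) * exp (2 * alpha * Y)).
  assert (hB1 : 1 <= B).
  { unfold B. assert (1 <= M ^ (2 * (j*j))) by (apply pow_R1_Rle; auto).
    assert (1 <= exp (2 * alpha * Y)).
    { rewrite <- exp_0. apply exp_le. assert (0 <= Y) by apply pos_INR. nra. }
    nra. }
  assert (hterm : forall k, (k <= m)%nat -> f k <= K + B).
  { intros k Hk.
    destruct (le_lt_dec k 3) as [h3|h3].
    - assert (f k <= K).
      { unfold K. assert (0 <= f 0%nat /\ 0 <= f 1%nat /\ 0 <= f 2%nat /\ 0 <= f 3%nat) by
          (unfold f; repeat split; apply pow2_ge_0).
        destruct k as [|[|[|[|k]]]]; simpl; try lra; lia. }
      lra.
    - destruct (blocks j hj1 k ltac:(rewrite m_blk_1; unfold m in Hk; lia)) as [i [hi1 [hi2 hi3]]].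
      specialize (hi i k hi1 hi3).
      assert (hc : C ^ S i <= M ^ (j * j)).
      { apply Rle_trans with (M ^ S i). apply pow_incr. split; [lra| apply Rmax_l].
        apply Rle_pow; auto. nia. }
      assert (hy : exp (alpha * INR (2 ^ (i * i))) <= exp (alpha * Y)).
      { apply exp_le. apply Rmult_le_compat_l; [lra|]. apply le_INR.
        apply Nat.pow_le_mono_r; [lia|]. assert (i <= j - 1)%nat by lia. nia. }
      assert (0 <= C ^ S i) by (apply pow_le; lra).
      assert (habs : Rabs (p k x0) <= M ^ (j*j) * exp (alpha * Y)).
      { eapply Rle_trans; [apply hi|]. apply Rmult_le_compat; auto; left; apply exp_pos. }
      assert (f k <= B).
      { unfold f, B. rewrite <- Rsqr_pow2, Rsqr_abs, Rsqr_pow2.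
        replace (M ^ (2 * (j*j)) * exp (2 * alpha * Y)) with ((M ^ (j*j) * exp (alpha * Y)) ^ 2).
        - apply pow_incr. split; [apply Rabs_pos| auto].
        - rewrite Rpow_mult_distr, <- pow_mult, Nat.mul_comm. f_equal. simpl.
          rewrite Rmult_1_r, <- exp_plus. f_equal. ring. }
      lra. }
  assert (hSm : sum_f_R0 f m <= INR (S m) * (K + B)) by (apply sum_le_const; auto).
  assert (hm4 : INR (S m) <= E).
  { eapply Rle_trans; [|apply HJ3]. rewrite Nat.mul_1_l.
    replace 4 with (INR 4) by (simpl; lra). rewrite <- pow_INR. apply le_INR.
    assert (h := m_blk_bound j hj1). unfold m. lia. }
  assert (hMB : M ^ (2 * (j * j)) <= E) by exact HJ2.
  assert (hYE : exp (2 * alpha * Y) <= E).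
  { unfold E. apply exp_le.
    assert (hXY : Y * INR (2 ^ j) <= X).
    { unfold X, Y. rewrite <- mult_INR, <- Nat.pow_add_r. apply le_INR.
      apply Nat.pow_le_mono_r; [lia|]. nia. }
    assert (h8 : 8 * alpha / beta <= INR (2 ^ j)).
    { eapply Rle_trans; [|apply HJ5].
      assert (1 <= INR j) by (apply (le_INR 1); lia).
      assert (0 <= 8 * alpha / beta) by (apply Rmult_le_pos; [lra| left; apply Rinv_0_lt_compat; lra]).
      nra. }
    assert (0 <= Y) by apply pos_INR.
    assert (Y * (8 * alpha / beta) <= X) by nra.
    replace (Y * (8 * alpha / beta)) with (2 * alpha * Y / (beta / 4)) in H0 by (field; lra).
    apply Rmult_le_compat_r with (r := beta / 4) in H0; [|lra].
    unfold Rdiv at 1 in H0. rewrite Rmult_assoc, Rinv_l in H0; lra. }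
  assert (hK1 : K + 1 <= E).
  { eapply Rle_trans; [|apply HJ4]. rewrite Nat.mul_1_l.
    rewrite <- (pow_1 (K+1)) at 1. apply Rle_pow; [lra|]. nia. }
  assert (hB : B <= E * E).
  { unfold B. apply Rmult_le_compat; auto; try (left; apply exp_pos).
    apply pow_le; lra. }
  assert (hSm2 : sum_f_R0 f m <= E * E * E * E).
  { eapply Rle_trans; [exact hSm|].
    assert (K + B <= (K + 1) * B) by nra.
    assert (0 <= INR (S m)) by apply pos_INR.
    assert (INR (S m) * (K + B) <= E * ((K + 1) * B)) by (apply Rmult_le_compat; nra).
    assert ((K+1) * B <= E * (E * E)) by (apply Rmult_le_compat; nra).
    nra. }
  assert (hm_ge : (N <= m)%nat).
  { unfold m, m_blk. assert (h := Nat.pow_gt_lin_r 3 (j*j) ltac:(lia)). nia. }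
  assert (hc : center j = (m + 2 ^ (j * j) / 2)%nat) by reflexivity.
  assert (hSc : sum_f_R0 f (center j) <= E * E * sum_f_R0 f m).
  { rewrite hc. eapply Rle_trans; [apply HN; exact hm_ge|].
    apply Rmult_le_compat_r; [apply cond_pos_sum; intro; apply pow2_ge_0|].
    replace (E * E) with (exp (beta * (X / 2))) by (unfold E; rewrite <- exp_plus; f_equal; lra).
    apply exp_le. apply Rmult_le_compat_l; [lra|].
    assert (h := Nat.Div0.mul_div_le (2 ^ (j*j)) 2). apply le_INR in h.
    rewrite mult_INR in h. replace (INR 2) with 2 in h by (simpl; lra). unfold X. lra. }
  assert (hcm : (3 <= center j)%nat).
  { rewrite hc. unfold m, m_blk. assert (h : (3 ^ 1 <= 3 ^ (j*j))%nat) by (apply Nat.pow_le_mono_r; nia). rewrite Nat.pow_1_r in h. lia. }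
  set (u := p (center j - 1) x0 ^ 2 + p (center j) x0 ^ 2) in *.
  assert (hu : u <= sum_f_R0 f (center j)).
  { destruct (center j) as [|[|c]] eqn:Ec; [lia|lia|].
    unfold u. replace (S (S c) - 1)%nat with (S c) by lia.
    rewrite !tech5. assert (0 <= sum_f_R0 f c) by (apply cond_pos_sum; intro; apply pow2_ge_0).
    unfold f in *. lra. }
  set (d := D ^ S j).
  assert (hd : 0 < d) by (apply pow_lt; lra).
  assert (hd2 : d * d <= E).
  { eapply Rle_trans; [|apply HJ1].
    apply Rle_trans with (D2 ^ (2 * S j)).
    - rewrite Nat.mul_comm, pow_mult. replace ((D2 ^ S j) ^ 2) with (D2 ^ S j * D2 ^ S j) by ring.
      assert (d <= D2 ^ S j) by (apply pow_incr; split; [lra|apply Rmax_l]). nra.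
    - apply Rle_pow; auto. nia. }
  assert (hE4 : exp (beta * X) = E * E * E * E) by (unfold E; rewrite <- !exp_plus; f_equal; lra).
  rewrite hE4 in HJ0.
  assert (hu0 : 0 <= u) by (unfold u; assert (h1 := pow2_ge_0 (p (center j - 1) x0)); assert (h2 := pow2_ge_0 (p (center j) x0)); lra).
  assert (hsq : sqrt u * sqrt u = u) by (apply sqrt_sqrt; auto).
  assert (ht : 0 <= / d * (E * E * E * E)).
  { apply Rmult_le_pos; [left; apply Rinv_0_lt_compat; auto|]. nra. }
  assert (hu2 : (/ d * (E * E * E * E)) * (/ d * (E * E * E * E)) <= u).
  { fold d in HJ0. rewrite <- hsq. apply Rmult_le_compat; auto; lra. }
  assert (hdu : E * E * E * E * (E * E * E * E) <= d * d * u).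
  { replace (E * E * E * E * (E * E * E * E)) with (d * d * ((/ d * (E * E * E * E)) * (/ d * (E * E * E * E)))) by (field; lra).
    apply Rmult_le_compat_l; nra. }
  assert (hup : d * d * u <= E * (E * E * (E * E * E * E))).
  { apply Rmult_le_compat; nra. }
  assert (hE7 : E * E * E * E * E * E * E < E * E * E * E * E * E * E * E).
  { assert (0 < E * E * E * E * E * E * E) by (repeat apply Rmult_lt_0_compat; lra). nra. }
  nra.
Qed.
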